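(* Let $\tau$ be a $\sigma$-maxitive measure on a $\sigma$-algebra $\mathcal{B}$ of subsets of a nonempty set $E$. Then the following are equivalent: - $\tau$ has the Radon–Nikodym property with respect to the Sugeno integral, i.e. for every $\sigma$-maxitive measure $\nu$ on $\mathcal{B}$ with $\nu\ll_\wedge\tau$ there is a $\mathcal{B}$-measurable $c:E\to[0,\infty]$ with $\nu(B)=\sup_{t\ge0}\min\big(t,\tau(B\cap\{c>t\})\big)$ for all $B\in\mathcal{B}$; - $\tau$ is $\sigma$-principal.
   Context: A $\sigma$-maxitive measure on $\mathcal{B}$ is a map $\nu:\mathcal{B}\to[0,\infty]$ with $\nu(\emptyset)=0$ and $\nu(\bigcup_j B_j)=\sup_j\nu(B_j)$ for every countable family $(B_j)$ in $\mathcal{B}$. A map $f:E\to[0,\infty]$ is $\mathcal{B}$-measurable if $\{f>t\}\in\mathcal{B}$ for all $t\in[0,\infty)$. Here the pseudo-multiplication is $\odot=\min$, whose identity is $\infty$; every element of $[0,\infty]$ is $\odot$-finite in this case. Absolute continuity $\nu\ll_\wedge\tau$ means $\nu(B)\le\min(\infty,\tau(B))=\tau(B)$ for all $B\in\mathcal{B}$. A $\sigma$-ideal of $\mathcal{B}$ is a nonempty subfamily closed under countable unions and under passing to measurable subsets. A set is $\tau$-negligible if it is contained in some $B\in\mathcal{B}$ with $\tau(B)=0$. $\tau$ is $\sigma$-principal if for every $\sigma$-ideal $\mathcal{I}$ of $\mathcal{B}$ there is $L\in\mathcal{I}$ such that $S\setminus L$ is $\tau$-negligible for all $S\in\mathcal{I}$.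 *)

(* Defs.v *)
From Stdlib Require Import Reals.
Open Scope R_scope.

(* Extended reals R U {+oo}; values in [0,oo] are enforced by nonnegativity hypotheses. *)
Inductive Rbar : Type := Fin (x : R) | PInf.

Definition Rbar_le (a b : Rbar) : Prop :=
  match a, b with
  | Fin x, Fin y => x <= y
  | _, PInf => True
  | PInf, Fin _ => False
  end.

Definition Rbar_lt (a b : Rbar) : Prop :=
  match a, b with
  | Fin x, Fin y => x < y
  | Fin _, PInf => True
  | PInf, _ => False
  end.

Definition Rbar_min (a b : Rbar) : Rbar :=
  match a, b with
  | Fin x, Fin y => Fin (Rmin x y)
  | Fin x, PInf => Fin x
  | PInf, b => b
  end.

Definition is_sup (S : Rbar -> Prop) (l : Rbar) : Prop :=
  (forall a, S a -> Rbar_le a l) /\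
  (forall u, (forall a, S a -> Rbar_le a u) -> Rbar_le l u).

Definition emptyset {E : Type} : E -> Prop := fun _ => False.
Definition setI {E : Type} (A C : E -> Prop) : E -> Prop := fun x => A x /\ C x.
Definition setD {E : Type} (A C : E -> Prop) : E -> Prop := fun x => A x /\ ~ C x.
Definition bigcup {E : Type} (F : nat -> E -> Prop) : E -> Prop :=
  fun x => exists j, F j x.
Definition subset {E : Type} (A C : E -> Prop) : Prop := forall x, A x -> C x.

Definition sigma_algebra {E : Type} (B : (E -> Prop) -> Prop) : Prop :=
  B (fun _ => True) /\
  (forall A, B A -> B (fun x => ~ A x)) /\
  (forall F : nat -> E -> Prop, (forall j, B (F j)) -> B (bigcup F)).

Definition sigma_maxitive {E : Type} (B : (E -> Prop) -> Prop)
  (nu : (E -> Prop) -> Rbar) : Prop :=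
  (forall A, B A -> Rbar_le (Fin 0) (nu A)) /\
  nu emptyset = Fin 0 /\
  (forall F : nat -> E -> Prop, (forall j, B (F j)) ->
     is_sup (fun a => exists j, a = nu (F j)) (nu (bigcup F))).

Definition measurable_fun {E : Type} (B : (E -> Prop) -> Prop) (f : E -> Rbar) : Prop :=
  (forall x, Rbar_le (Fin 0) (f x)) /\
  (forall t : R, 0 <= t -> B (fun x => Rbar_lt (Fin t) (f x))).

(* absolute continuity nu <<_min tau : nu(A) <= min(oo, tau(A)) = tau(A) *)
Definition abs_cont_min {E : Type} (B : (E -> Prop) -> Prop)
  (nu tau : (E -> Prop) -> Rbar) : Prop :=
  forall A, B A -> Rbar_le (nu A) (Rbar_min PInf (tau A)).

Definition sugeno_density {E : Type} (tau : (E -> Prop) -> Rbar) (c : E -> Rbar)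
  (A : E -> Prop) (v : Rbar) : Prop :=
  is_sup (fun a => exists t : R, 0 <= t /\
            a = Rbar_min (Fin t) (tau (setI A (fun x => Rbar_lt (Fin t) (c x))))) v.

Definition radon_nikodym_sugeno {E : Type} (B : (E -> Prop) -> Prop)
  (tau : (E -> Prop) -> Rbar) : Prop :=
  forall nu, sigma_maxitive B nu -> abs_cont_min B nu tau ->
    exists c : E -> Rbar, measurable_fun B c /\
      forall A, B A -> sugeno_density tau c A (nu A).

Definition sigma_ideal {E : Type} (B : (E -> Prop) -> Prop)
  (I : (E -> Prop) -> Prop) : Prop :=
  (forall A, I A -> B A) /\
  (exists A, I A) /\
  (forall F : nat -> E -> Prop, (forall j, I (F j)) -> I (bigcup F)) /\
  (forall A S, I S -> B A -> subset A S -> I A).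

Definition negligible {E : Type} (B : (E -> Prop) -> Prop)
  (tau : (E -> Prop) -> Rbar) (N : E -> Prop) : Prop :=
  exists A, B A /\ tau A = Fin 0 /\ subset N A.

Definition sigma_principal {E : Type} (B : (E -> Prop) -> Prop)
  (tau : (E -> Prop) -> Rbar) : Prop :=
  forall I, sigma_ideal B I ->
    exists L, I L /\ forall S, I S -> negligible B tau (setD S L).

(* Main.v *)
Require Import Defs.
From Stdlib Require Import Reals Lra Classical Lia ZArith FunctionalExtensionality PropExtensionality IndefiniteDescription ClassicalEpsilon.
Open Scope R_scope.

Lemma set_ext {E : Type} (X Y : E -> Prop) : (forall x, X x <-> Y x) -> X = Y.
Proof. intro H; apply functional_extensionality; intro x; apply propositional_extensionality; auto. Qed.

Lemma Rle_refl' (a : Rbar) : Rbar_le a a.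
Proof. destruct a; simpl; auto; lra. Qed.

Lemma Rle_trans' (a b c : Rbar) : Rbar_le a b -> Rbar_le b c -> Rbar_le a c.
Proof. destruct a, b, c; simpl; auto; try lra; tauto. Qed.

Lemma Rle_antisym' (a b : Rbar) : Rbar_le a b -> Rbar_le b a -> a = b.
Proof. destruct a, b; simpl; try tauto; intros; f_equal; lra. Qed.

Lemma Rnle_lt (a b : Rbar) : ~ Rbar_le a b -> Rbar_lt b a.
Proof. destruct a, b; simpl; try tauto; intros; lra. Qed.

Lemma Rlt_nle (a b : Rbar) : Rbar_lt a b -> Rbar_le b a -> False.
Proof. destruct a, b; simpl; try tauto; intros; lra. Qed.

Lemma Rlt_le_trans' (a b c : Rbar) : Rbar_lt a b -> Rbar_le b c -> Rbar_lt a c.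
Proof. destruct a, b, c; simpl; try tauto; intros; lra. Qed.

Lemma Rle_lt_trans' (a b c : Rbar) : Rbar_le a b -> Rbar_lt b c -> Rbar_lt a c.
Proof. destruct a, b, c; simpl; try tauto; intros; lra. Qed.

Lemma le_PInf (a : Rbar) : Rbar_le a PInf.
Proof. destruct a; exact I. Qed.

Lemma min_le_r (t : R) (b : Rbar) : Rbar_le (Rbar_min (Fin t) b) b.
Proof. destruct b; simpl; auto. apply Rmin_r. Qed.

Lemma min_le_l (t : R) (b : Rbar) : Rbar_le (Rbar_min (Fin t) b) (Fin t).
Proof. destruct b; simpl; auto. apply Rmin_l. lra. Qed.

Lemma min_mono (t r : R) (b : Rbar) : t <= r -> Rbar_le (Rbar_min (Fin t) b) (Rbar_min (Fin r) b).
Proof. destruct b; simpl; auto. intros. unfold Rmin; repeat destruct Rle_dec; lra. Qed.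

Lemma min_zero (b : Rbar) : Rbar_le (Fin 0) b -> Rbar_min (Fin 0) b = Fin 0.
Proof. destruct b; simpl; auto. intros; f_equal; apply Rmin_left; auto. Qed.

Lemma min_small (t v : R) (b : Rbar) : Rbar_le (Rbar_min (Fin t) b) (Fin v) -> v < t -> Rbar_le b (Fin v).
Proof. destruct b; simpl; auto; try lra. unfold Rmin; destruct Rle_dec; lra. Qed.

Lemma min_pos_zero (t : R) (b : Rbar) : 0 < t -> Rbar_le (Rbar_min (Fin t) b) (Fin 0) -> Rbar_le b (Fin 0).
Proof. intros; eapply min_small; eauto. Qed.

Lemma min_t0 (t : R) (w : Rbar) : 0 <= t -> Rbar_le (Fin 0) w -> Rbar_le (Rbar_min (Fin t) (Fin 0)) w.
Proof. intros. eapply Rle_trans'; [|eauto]. simpl. apply Rmin_r. Qed.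

Definition is_inf (S : Rbar -> Prop) (l : Rbar) : Prop :=
  (forall a, S a -> Rbar_le l a) /\
  (forall u, (forall a, S a -> Rbar_le u a) -> Rbar_le u l).

Lemma sup_ex (T : Rbar -> Prop) : T (Fin 0) -> exists l, is_sup T l.
Proof.
  intro H0.
  destruct (classic (exists M, forall a, T a -> Rbar_le a (Fin M))) as [[M HM]|HN].
  - destruct (completeness (fun y => T (Fin y))) as [m [Hm1 Hm2]].
    + exists M. intros y Hy. exact (HM _ Hy).
    + exists 0; auto.
    + exists (Fin m). split.
      * intros a Ha. destruct a as [y|]. simpl. apply Hm1; auto. exact (HM _ Ha).
      * intros u Hu. destruct u as [w|]; [|exact I]. simpl. apply Hm2.
        intros y Hy. exact (Hu _ Hy).
  - exists PInf. split.
    + intros; apply le_PInf.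
    + intros u Hu. destruct u as [w|]; [|exact I]. exfalso; apply HN; exists w; auto.
Qed.

Lemma inf_ex (T : Rbar -> Prop) : (exists a, T a) -> (forall a, T a -> Rbar_le (Fin 0) a) ->
  exists l, is_inf T l.
Proof.
  intros [a0 Ha0] Hpos.
  destruct (classic (exists x, T (Fin x))) as [[x0 Hx0]|HN].
  - destruct (completeness (fun y => T (Fin (- y)))) as [m [Hm1 Hm2]].
    + exists 0. intros y Hy. specialize (Hpos _ Hy). simpl in Hpos. lra.
    + exists (- x0). rewrite Ropp_involutive; auto.
    + exists (Fin (- m)). split.
      * intros a Ha. destruct a as [y|]; [|exact I]. simpl.
        assert (- y <= m) by (apply Hm1; rewrite Ropp_involutive; auto). lra.
      * intros u Hu. destruct u as [w|].
        -- simpl. assert (m <= - w); [|lra]. apply Hm2. intros y Hy.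
           specialize (Hu _ Hy). simpl in Hu. lra.
        -- specialize (Hu _ Hx0). contradiction.
  - exists PInf. split.
    + intros a Ha. destruct a as [y|]. exfalso; apply HN; eauto. exact I.
    + intros; apply le_PInf.
Qed.

Lemma inf_approx (T : Rbar -> Prop) (y eps : R) : is_inf T (Fin y) -> 0 < eps ->
  exists a, T a /\ Rbar_le a (Fin (y + eps)).
Proof.
  intros [H1 H2] He. apply NNPP; intro HN.
  assert (Rbar_le (Fin (y + eps)) (Fin y)); [|simpl in *; lra].
  apply H2. intros a Ha. destruct (classic (Rbar_le a (Fin (y + eps)))) as [h|h].
  - exfalso; eauto.
  - apply Rnle_lt in h. destruct a; simpl in *; auto; lra.
Qed.
Lemma B_compl {E} (B : (E -> Prop) -> Prop) (HB : sigma_algebra B) A : B A -> B (fun x => ~ A x).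
Proof. destruct HB as [_ [H _]]; auto. Qed.

Lemma B_bigcup {E} (B : (E -> Prop) -> Prop) (HB : sigma_algebra B) F : (forall j, B (F j)) -> B (bigcup F).
Proof. destruct HB as [_ [_ H]]; auto. Qed.

Lemma B_empty {E} (B : (E -> Prop) -> Prop) (HB : sigma_algebra B) : B emptyset.
Proof.
  replace (@emptyset E) with (fun x : E => ~ (fun _ : E => True) x).
  - apply B_compl; auto. apply HB.
  - apply set_ext. unfold emptyset; tauto.
Qed.

Definition U2 {E} (X Y : E -> Prop) : nat -> E -> Prop := fun k => match k with 0 => X | _ => Y end.

Lemma B_U2 {E} (B : (E -> Prop) -> Prop) (HB : sigma_algebra B) X Y : B X -> B Y -> B (bigcup (U2 X Y)).
Proof. intros; apply B_bigcup; auto. intros [|j]; simpl; auto. Qed.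

Lemma B_setI {E} (B : (E -> Prop) -> Prop) (HB : sigma_algebra B) X Y : B X -> B Y -> B (setI X Y).
Proof.
  intros. replace (setI X Y) with (fun x => ~ (bigcup (U2 (fun x => ~ X x) (fun x => ~ Y x))) x).
  - apply B_compl; auto. apply B_U2; auto; apply B_compl; auto.
  - apply set_ext. intro x. unfold setI, bigcup, U2. split.
    + intro H1. split; apply NNPP; intro; apply H1; [exists 0%nat|exists 1%nat]; auto.
    + intros [h1 h2] [[|j] hj]; auto.
Qed.

Lemma B_setD {E} (B : (E -> Prop) -> Prop) (HB : sigma_algebra B) X Y : B X -> B Y -> B (setD X Y).
Proof. intros. apply (B_setI B HB X (fun x => ~ Y x)); auto. apply B_compl; auto. Qed.

Lemma m_mono {E} (B : (E -> Prop) -> Prop) (m : (E -> Prop) -> Rbar) (Hm : sigma_maxitive B m)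
  X Y : B X -> B Y -> subset X Y -> Rbar_le (m X) (m Y).
Proof.
  intros HX HY Hs. destruct Hm as [_ [_ Hsup]].
  assert (bigcup (U2 X Y) = Y) as Heq.
  { apply set_ext; intro x; unfold bigcup, U2; split.
    - intros [[|j] h]; auto.
    - intro; exists 1%nat; auto. }
  destruct (Hsup (U2 X Y)) as [H1 _]. { intros [|j]; auto. }
  rewrite Heq in H1. apply H1. exists 0%nat; auto.
Qed.

Lemma m_sup_le {E} (B : (E -> Prop) -> Prop) (m : (E -> Prop) -> Rbar) (Hm : sigma_maxitive B m)
  F w : (forall j, B (F j)) -> (forall j, Rbar_le (m (F j)) w) -> Rbar_le (m (bigcup F)) w.
Proof.
  intros HF Hw. destruct Hm as [_ [_ Hsup]]. destruct (Hsup F HF) as [_ H2].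
  apply H2. intros a [j ->]; auto.
Qed.

Lemma m_pos {E} (B : (E -> Prop) -> Prop) (m : (E -> Prop) -> Rbar) (Hm : sigma_maxitive B m)
  X : B X -> Rbar_le (Fin 0) (m X).
Proof. destruct Hm as [H _]; auto. Qed.

Lemma m_empty {E} (B : (E -> Prop) -> Prop) (m : (E -> Prop) -> Rbar) (Hm : sigma_maxitive B m) :
  m emptyset = Fin 0.
Proof. destruct Hm as [_ [H _]]; auto. Qed.

Lemma min_U {E} (B : (E -> Prop) -> Prop) (m : (E -> Prop) -> Rbar) (Hm : sigma_maxitive B m)
  F t w : (forall j, B (F j)) -> (forall j, Rbar_le (Rbar_min (Fin t) (m (F j))) w) ->
  Rbar_le (Rbar_min (Fin t) (m (bigcup F))) w.
Proof.
  intros HF Hw. destruct w as [a|]; [|apply le_PInf].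
  destruct (Rle_dec t a).
  - eapply Rle_trans'; [apply min_le_l|]. simpl; auto.
  - eapply Rle_trans'; [apply min_le_r|]. apply (m_sup_le B m Hm); auto.
    intro j. eapply min_small; eauto. lra.
Qed.
Definition rat (m n : nat) : R := INR m / INR (S n).

Lemma rat_nonneg m n : 0 <= rat m n.
Proof. unfold rat. apply Rmult_le_pos. apply pos_INR. left; apply Rinv_0_lt_compat, lt_0_INR; lia. Qed.

Lemma rat_dense a b : 0 <= a -> a < b -> exists m n, a < rat m n < b.
Proof.
  intros Ha Hab.
  destruct (archimed_cor1 (b - a)) as [N [HN1 HN2]]; [lra|].
  set (n := pred N). assert (HSn : INR (S n) = INR N) by (f_equal; unfold n; lia).
  assert (HNp : 0 < INR N) by (apply lt_0_INR; lia).
  destruct (archimed (a * INR N)) as [Hu1 Hu2].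
  assert (Hz : (0 < up (a * INR N))%Z).
  { apply lt_IZR. assert (0 <= a * INR N) by (apply Rmult_le_pos; lra). lra. }
  exists (Z.to_nat (up (a * INR N))), n. unfold rat. rewrite HSn.
  rewrite INR_IZR_INZ, Z2Nat.id by lia.
  set (u := IZR (up (a * INR N))) in *.
  split.
  - apply (Rmult_lt_reg_r (INR N)); auto. unfold Rdiv. rewrite Rmult_assoc, Rinv_l by lra. lra.
  - assert (u / INR N <= a + / INR N).
    { apply (Rmult_le_reg_r (INR N)); auto. unfold Rdiv. rewrite Rmult_assoc, Rinv_l by lra.
      rewrite Rmult_plus_distr_r, Rinv_l by lra. lra. }
    lra.
Qed.

Definition Jset {E} (B : (E -> Prop) -> Prop) (nu : (E -> Prop) -> Rbar) (q : R) : (E -> Prop) -> Prop :=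
  fun A => B A /\ Rbar_le (nu A) (Fin q).

Lemma J_ideal {E} (B : (E -> Prop) -> Prop) (HB : sigma_algebra B) nu (Hnu : sigma_maxitive B nu) q :
  0 <= q -> sigma_ideal B (Jset B nu q).
Proof.
  intro Hq. unfold Jset. split; [|split; [|split]].
  - intros A [h _]; auto.
  - exists emptyset. split. apply B_empty; auto. rewrite (m_empty B nu Hnu). simpl; auto.
  - intros F HF. split. apply B_bigcup; auto; intro j; apply HF.
    apply (m_sup_le B nu Hnu). intro j; apply HF. intro j; apply HF.
  - intros A S [HS1 HS2] HA Hs. split; auto. eapply Rle_trans'; [|eauto].
    apply (m_mono B nu Hnu); auto.
Qed.

Lemma dir2 (E : Type) (B : (E -> Prop) -> Prop) (HB : sigma_algebra B)
  (tau : (E -> Prop) -> Rbar) (Htau : sigma_maxitive B tau) :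
  sigma_principal B tau -> radon_nikodym_sugeno B tau.
Proof.
  intros Hpr nu Hnu Hac.
  assert (Kex : forall m n, exists L, Jset B nu (rat m n) L /\
            forall S, Jset B nu (rat m n) S -> negligible B tau (setD S L)).
  { intros m n. apply Hpr. apply J_ideal; auto. apply rat_nonneg. }
  set (K := fun m n => proj1_sig (constructive_indefinite_description _ (Kex m n))).
  assert (HK : forall m n, Jset B nu (rat m n) (K m n) /\
            forall S, Jset B nu (rat m n) S -> negligible B tau (setD S (K m n))).
  { intros m n. exact (proj2_sig (constructive_indefinite_description _ (Kex m n))). }
  clearbody K.
  set (Ck := fun t x => exists m n, t < rat m n /\ ~ K m n x).
  assert (HCk : forall t, B (Ck t)).
  { intro t.
    replace (Ck t) with (bigcup (fun m => bigcup (fun n =>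
       if Rlt_dec t (rat m n) then (fun x => ~ K m n x) else emptyset))).
    - apply B_bigcup; auto; intro m. apply B_bigcup; auto; intro n.
      destruct Rlt_dec. apply B_compl; auto. apply HK. apply B_empty; auto.
    - apply set_ext; intro x; unfold Ck, bigcup; split.
      + intros [m [n h]]. destruct Rlt_dec; [|contradiction]. eauto.
      + intros [m [n [h1 h2]]]. exists m, n. destruct Rlt_dec; [auto|contradiction]. }
  set (T := fun x a => a = Fin 0 \/ exists m n, ~ K m n x /\ a = Fin (rat m n)).
  assert (Tex : forall x, exists l, is_sup (T x) l).
  { intro x. apply sup_ex. left; auto. }
  set (c := fun x => proj1_sig (constructive_indefinite_description _ (Tex x))).
  assert (Hc : forall x, is_sup (T x) (c x)).
  { intro x. exact (proj2_sig (constructive_indefinite_description _ (Tex x))). }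
  clearbody c.
  assert (Hchar : forall t, 0 <= t -> (fun x => Rbar_lt (Fin t) (c x)) = Ck t).
  { intros t Ht. apply set_ext; intro x; split.
    - intro Hlt. apply NNPP; intro HN. apply (Rlt_nle _ _ Hlt). apply (proj2 (Hc x)).
      intros a [->|[m [n [h1 ->]]]]; simpl; auto.
      destruct (Rle_dec (rat m n) t); auto. exfalso; apply HN. exists m, n; split; auto; lra.
    - intros [m [n [h1 h2]]]. apply (Rlt_le_trans' _ (Fin (rat m n))). simpl; auto.
      apply (proj1 (Hc x)). right; eauto. }
  exists c. split.
  { split.
    - intro x. apply (proj1 (Hc x)). left; auto.
    - intros t Ht. rewrite Hchar; auto. }
  intros A HA.
  assert (P1 : forall m n Y, B Y -> (forall x, Y x -> ~ K m n x) ->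
            Rbar_le (Rbar_min (Fin (rat m n)) (tau Y)) (nu Y)).
  { intros m n Y HY Hdis. destruct (classic (Rbar_le (nu Y) (Fin (rat m n)))) as [h|h].
    - destruct (proj2 (HK m n) Y (conj HY h)) as [Z [HZ [HZ0 HZs]]].
      eapply Rle_trans'; [apply min_le_r|].
      eapply Rle_trans'; [apply (m_mono B tau Htau Y Z); auto|].
      { intros x hx. apply HZs. split; auto. }
      rewrite HZ0. apply (m_pos B nu Hnu); auto.
    - apply Rnle_lt in h. eapply Rle_trans'; [apply min_le_l|]. destruct (nu Y); simpl in *; auto; lra. }
  split.
  - intros a [t [Ht ->]]. rewrite Hchar; auto.
    replace (setI A (Ck t)) with (bigcup (fun m => bigcup (fun n =>
       if Rlt_dec t (rat m n) then setD A (K m n) else emptyset))).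
    + apply (min_U B tau Htau).
      { intro m. apply B_bigcup; auto; intro n. destruct Rlt_dec. apply B_setD; auto; apply HK.
        apply B_empty; auto. }
      intro m. apply (min_U B tau Htau).
      { intro n. destruct Rlt_dec. apply B_setD; auto; apply HK. apply B_empty; auto. }
      intro n. destruct Rlt_dec.
      * eapply Rle_trans'; [apply (min_mono t (rat m n)); lra|].
        eapply Rle_trans'; [apply P1|].
        { apply B_setD; auto; apply HK. }
        { intros x [_ h]; auto. }
        apply (m_mono B nu Hnu); auto. apply B_setD; auto; apply HK. intros x [h _]; auto.
      * rewrite (m_empty B tau Htau). apply min_t0; auto. apply (m_pos B nu Hnu); auto.
    + apply set_ext; intro x; unfold setI, setD, Ck, bigcup; split.
      * intros [m [n h]]. destruct Rlt_dec; [|contradiction]. destruct h; eauto.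
      * intros [h0 [m [n [h1 h2]]]]. exists m, n. destruct Rlt_dec; [auto|contradiction].
  - intros u Hu. destruct u as [v|]; [|apply le_PInf].
    assert (Hv : 0 <= v).
    { assert (h := Hu _ (ex_intro _ 0 (conj (Rle_refl 0) eq_refl))). cbv beta in h.
      rewrite min_zero in h. exact h. apply (m_pos B tau Htau). apply B_setI; auto.
      rewrite Hchar; auto; lra. }
    apply NNPP; intro Hn. apply Rnle_lt in Hn.
    assert (Hb : exists b, v < b /\ Rbar_le (Fin b) (nu A)).
    { destruct (nu A) as [y|]. exists y; simpl in *; split; lra. exists (v + 1); split; simpl; auto; lra. }
    destruct Hb as [b [Hvb Hbn]].
    destruct (rat_dense v b) as [m1 [n1 [Hq1 Hq1']]]; auto.
    destruct (rat_dense (rat m1 n1) b) as [m2 [n2 [Hq2 Hq2']]]; [lra|lra|].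
    set (q1 := rat m1 n1) in *. set (q2 := rat m2 n2) in *.
    assert (HA2 : A = bigcup (U2 (setI A (Ck q1)) (setD A (Ck q1)))).
    { apply set_ext; intro x; unfold bigcup, U2, setI, setD; split.
      - intro h. destruct (classic (Ck q1 x)); [exists 0%nat|exists 1%nat]; auto.
      - intros [[|j] h]; tauto. }
    assert (Hle : Rbar_le (nu A) (Fin q2)).
    { rewrite HA2. apply (m_sup_le B nu Hnu).
      { intros [|j]; simpl. apply B_setI; auto. apply B_setD; auto. }
      intros [|j]; simpl.
      - eapply Rle_trans'. { specialize (Hac (setI A (Ck q1))). simpl in Hac. apply Hac. apply B_setI; auto. }
        apply (Rle_trans' _ (Fin v)); [|simpl; lra].
        apply (min_small q1 v); [|lra].
        rewrite <- (Hchar q1) by lra. apply Hu. exists q1; split; auto. lra.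
      - eapply Rle_trans'; [apply (m_mono B nu Hnu _ (K m2 n2))|].
        + apply B_setD; auto.
        + apply HK.
        + intros x [h1 h2]. apply NNPP; intro h3. apply h2. exists m2, n2; split; auto.
        + apply HK. }
    apply (Rlt_nle (Fin q2) (nu A)); auto.
    apply (Rlt_le_trans' _ (Fin b)); simpl; auto.
Qed.
Lemma dir1 (E : Type) (B : (E -> Prop) -> Prop) (HB : sigma_algebra B)
  (tau : (E -> Prop) -> Rbar) (Htau : sigma_maxitive B tau) :
  radon_nikodym_sugeno B tau -> sigma_principal B tau.
Proof.
  intros Hrn I HI.
  destruct HI as [HIB [HIne [HIU HIs]]].
  assert (HI0 : I emptyset).
  { destruct HIne as [A0 HA0]. apply (HIs _ A0); auto. apply B_empty; auto. intros x []. }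
  set (V := fun A a => exists S, I S /\ a = tau (setD A S)).
  assert (Vex : forall A, B A -> exists l, is_inf (V A) l).
  { intros A HA. apply inf_ex.
    - exists (tau (setD A emptyset)). exists emptyset; auto.
    - intros a [S [HS ->]]. apply (m_pos B tau Htau). apply B_setD; auto. }
  set (nu := fun A => epsilon (inhabits (Fin 0)) (fun l => is_inf (V A) l)).
  assert (Hnu : forall A, B A -> is_inf (V A) (nu A)).
  { intros A HA. unfold nu. apply epsilon_spec. auto. }
  clearbody nu.
  assert (setD_empty : forall A : E -> Prop, setD A emptyset = A).
  { intro A. apply set_ext; intro x; unfold setD, emptyset; tauto. }
  assert (nu_le_tau : forall A, B A -> Rbar_le (nu A) (tau A)).
  { intros A HA. rewrite <- (setD_empty A) at 2. apply (proj1 (Hnu A HA)). exists emptyset; auto. }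
  assert (nu_pos : forall A, B A -> Rbar_le (Fin 0) (nu A)).
  { intros A HA. apply (proj2 (Hnu A HA)). intros a [S [HS ->]]. apply (m_pos B tau Htau). apply B_setD; auto. }
  assert (nuI : forall S, I S -> nu S = Fin 0).
  { intros S HS. apply Rle_antisym'; [|apply nu_pos; auto].
    eapply Rle_trans'. apply (proj1 (Hnu S (HIB S HS))). exists S; split; eauto.
    replace (setD S S) with (@emptyset E). rewrite (m_empty B tau Htau). simpl; lra.
    apply set_ext; intro x; unfold setD, emptyset; tauto. }
  assert (Hmax : sigma_maxitive B nu).
  { split; [exact nu_pos|split].
    - rewrite nuI; auto.
    - intros F HF. split.
      + intros a [j ->]. apply (proj2 (Hnu _ (B_bigcup B HB F HF))). intros a [S [HS ->]].
        eapply Rle_trans'. apply (proj1 (Hnu _ (HF j))). exists S; eauto.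
        apply (m_mono B tau Htau). apply B_setD; auto. apply B_setD; auto. apply B_bigcup; auto.
        intros x [h1 h2]. split; auto. exists j; auto.
      + intros u Hu. destruct u as [v|]; [|apply le_PInf].
        assert (Heps : forall eps, 0 < eps -> Rbar_le (nu (bigcup F)) (Fin (v + eps))).
        { intros eps He.
          assert (Hch : forall j, exists S, I S /\ Rbar_le (tau (setD (F j) S)) (Fin (v + eps))).
          { intro j. assert (hj := Hu _ (ex_intro _ j eq_refl)). cbv beta in hj.
            destruct (nu (F j)) as [y|] eqn:Hy; [|contradiction].
            destruct (inf_approx (V (F j)) y eps) as [a [[S [HS ->]] Ha]]; auto.
            rewrite <- Hy; auto. exists S; split; auto. eapply Rle_trans'; eauto. simpl in *; lra. }
          set (G := fun j => proj1_sig (constructive_indefinite_description _ (Hch j))).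
          assert (HG : forall j, I (G j) /\ Rbar_le (tau (setD (F j) (G j))) (Fin (v + eps))).
          { intro j. exact (proj2_sig (constructive_indefinite_description _ (Hch j))). }
          clearbody G.
          eapply Rle_trans'. apply (proj1 (Hnu _ (B_bigcup B HB F HF))). exists (bigcup G); split; eauto.
          apply HIU; intro j; apply HG.
          replace (setD (bigcup F) (bigcup G)) with (bigcup (fun j => setD (F j) (bigcup G))).
          - apply (m_sup_le B tau Htau).
            + intro j. apply B_setD; auto. apply B_bigcup; auto. intro k; apply HIB, HG.
            + intro j. eapply Rle_trans'; [|apply (proj2 (HG j))].
              apply (m_mono B tau Htau). apply B_setD; auto. apply B_bigcup; auto. intro k; apply HIB, HG.
              apply B_setD; auto. apply HIB, HG.
              intros x [h1 h2]. split; auto. intro; apply h2; exists j; auto.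
          - apply set_ext; intro x; unfold setD, bigcup; split.
            + intros [j [h1 h2]]. split; eauto.
            + intros [[j h1] h2]. exists j; auto. }
        destruct (nu (bigcup F)) as [y|] eqn:Hy.
        * simpl. apply NNPP; intro h. specialize (Heps ((y - v)/2)). simpl in Heps. lra.
        * specialize (Heps 1). simpl in Heps. apply Heps; lra. }
  assert (Hac : abs_cont_min B nu tau).
  { intros A HA. simpl. auto. }
  destruct (Hrn nu Hmax Hac) as [c [[Hc0 HcB] Hdens]].
  set (Dt := fun t x => Rbar_lt (Fin t) (c x)).
  set (Dc := fun x => ~ Dt 0 x).
  assert (HDc : B Dc) by (apply B_compl; auto; apply HcB; lra).
  assert (Ha : forall S0, I S0 -> tau (setI S0 (Dt 0)) = Fin 0).
  { intros S0 HS. apply Rle_antisym'; [|apply (m_pos B tau Htau); apply B_setI; auto; apply HcB; lra].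
    replace (setI S0 (Dt 0)) with (bigcup (fun n => setI S0 (Dt (/ INR (S n))))).
    - apply (m_sup_le B tau Htau).
      + intro n. apply B_setI; auto. apply HcB. left; apply Rinv_0_lt_compat, lt_0_INR; lia.
      + intro n. assert (Hpos : 0 < / INR (S n)) by (apply Rinv_0_lt_compat, lt_0_INR; lia).
        apply (min_pos_zero (/ INR (S n))); auto.
        rewrite <- (nuI S0 HS). apply (proj1 (Hdens S0 (HIB S0 HS))). exists (/ INR (S n)); split; auto. lra.
    - apply set_ext; intro x; unfold setI, bigcup, Dt; split.
      + intros [n [h1 h2]]. split; auto. eapply Rle_lt_trans'; [|eauto]. change (0 <= / INR (S n)).
        left; apply Rinv_0_lt_compat, lt_0_INR; lia.
      + intros [h1 h2]. destruct (c x) as [y|] eqn:Hcx.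
        * simpl in h2. destruct (archimed_cor1 y h2) as [N [HN1 HN2]].
          exists (pred N). split; auto. change (/ INR (S (pred N)) < y). replace (S (pred N)) with N by lia. lra.
        * exists 0%nat. split; auto; exact I. }
  assert (Hb : Rbar_le (nu Dc) (Fin 0)).
  { apply (proj2 (Hdens Dc HDc)). intros a [t [Ht ->]].
    replace (setI Dc (fun x => Rbar_lt (Fin t) (c x))) with (@emptyset E).
    - rewrite (m_empty B tau Htau). simpl. apply Rmin_r.
    - apply set_ext; intro x; unfold setI, Dc, Dt, emptyset; split; [tauto|].
      intros [h1 h2]. apply h1. eapply Rle_lt_trans'; [|eauto]. simpl; auto. }
  assert (Hch : forall n : nat, exists S0, I S0 /\ Rbar_le (tau (setD Dc S0)) (Fin (/ INR (S n)))).
  { intro n. destruct (nu Dc) as [y|] eqn:Hy; [|contradiction].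
    assert (Hpos : 0 < / INR (S n)) by (apply Rinv_0_lt_compat, lt_0_INR; lia).
    destruct (inf_approx (V Dc) y (/ INR (S n))) as [a [[S0 [HS ->]] Hle]]; auto.
    rewrite <- Hy; auto. exists S0; split; auto. eapply Rle_trans'; eauto. simpl in *; lra. }
  set (G := fun j => proj1_sig (constructive_indefinite_description _ (Hch j))).
  assert (HG : forall j, I (G j) /\ Rbar_le (tau (setD Dc (G j))) (Fin (/ INR (S j)))).
  { intro j. exact (proj2_sig (constructive_indefinite_description _ (Hch j))). }
  clearbody G.
  assert (HL : I (bigcup G)) by (apply HIU; intro j; apply HG).
  assert (HLB : B (bigcup G)) by auto.
  assert (HDL : tau (setD Dc (bigcup G)) = Fin 0).
  { apply Rle_antisym'; [|apply (m_pos B tau Htau); apply B_setD; auto].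
    assert (Hall : forall n, Rbar_le (tau (setD Dc (bigcup G))) (Fin (/ INR (S n)))).
    { intro n. eapply Rle_trans'; [|apply (proj2 (HG n))].
      apply (m_mono B tau Htau). apply B_setD; auto. apply B_setD; auto. apply HIB, HG.
      intros x [h1 h2]; split; auto. intro; apply h2; exists n; auto. }
    destruct (tau (setD Dc (bigcup G))) as [y|] eqn:Hy.
    - simpl. apply NNPP; intro h.
      destruct (archimed_cor1 y) as [N [HN1 HN2]]; [lra|].
      specialize (Hall (pred N)). change (y <= / INR (S (pred N))) in Hall. replace (S (pred N)) with N in Hall by lia. lra.
    - specialize (Hall 0%nat). exact Hall. }
  exists (bigcup G). split; auto.
  intros S HS. exists (bigcup (U2 (setI S (Dt 0)) (setD Dc (bigcup G)))). split; [|split].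
  - apply B_U2; auto. apply B_setI; auto. apply HcB; lra. apply B_setD; auto.
  - apply Rle_antisym'.
    + apply (m_sup_le B tau Htau).
      * intros [|j]; simpl. apply B_setI; auto. apply HcB; lra. apply B_setD; auto.
      * intros [|j]; simpl. rewrite Ha; auto; simpl; lra. rewrite HDL; simpl; lra.
    + apply (m_pos B tau Htau). apply B_U2; auto. apply B_setI; auto. apply HcB; lra. apply B_setD; auto.
  - intros x [h1 h2]. destruct (classic (Dt 0 x)).
    + exists 0%nat. split; auto.
    + exists 1%nat. split; auto.
Qed.

Theorem mainTheorem3 (E : Type) (HE : inhabited E)
  (B : (E -> Prop) -> Prop) (HB : sigma_algebra B)
  (tau : (E -> Prop) -> Rbar) (Htau : sigma_maxitive B tau) :
  radon_nikodym_sugeno B tau <-> sigma_principal B tau.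
Proof.
  split. apply dir1; auto. apply dir2; auto.
Qed.
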